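(* Let $s\ge 2$ and $r',s'\in\mathbb N$ with $1\le r'\le s'$, and let $F:U\subseteq\mathcal G(1,s)=\mathbb P^{1,s}\to\mathcal G(r',s')$ be a local orthogonal map. If $\dim V_{F(H\cap U)}=\dim V_{F(U)}$ for every general hyperplane $H$ in $\mathbb P^{1,s}$, then $F$ is null, i.e. $F(U)$ consists of null points of $\mathcal G(r',s')$.
   Context: For $r\le s$, $\mathbb C^{r,s}$ denotes $\mathbb C^{r+s}$ with the indefinite Hermitian form $\langle z,w\rangle_{r,s}=\sum_{i=1}^r z_i\bar w_i-\sum_{i=r+1}^{r+s}z_i\bar w_i$, and $\mathbb P^{r,s}$ its projectivization. $\mathcal G(r,s)$ denotes the Grassmannian $G(r,r+s)$; for $p\in\mathcal G(r,s)$, $V_p\subseteq\mathbb C^{r+s}$ is the corresponding $r$-dimensional subspace, and $p\perp q$ means $V_p\perp V_q$ with respect to $\langle\cdot,\cdot\rangle_{r,s}$; $p$ is null if $V_p\perp V_p$. For a set $K\subseteq\mathcal G(r,s)$, $V_K$ denotes the linear span of $\bigcup_{p\in K}V_p$. A holomorphic map $F:U\to\mathcal G(r',s')$, with $U\subseteq\mathcal G(r,s)$ a connected open set containing a null point, is a local orthogonal map if $F(p)\perp F(q)$ for all $p,q\in U$ with $p\perp q$; it is null if $F(U)$ consists of null points. ''General hyperplane'' means a hyperplane in a nonempty Zariski-open subset of the space of hyperplanes of $\mathbb P^{1,s}$. *)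

(* Defs.v *)
From HB Require Import structures.
From mathcomp Require Import all_boot all_order all_algebra.
From mathcomp Require Import all_classical all_reals all_analysis.
From mathcomp Require Import complex.
From mathcomp Require mpoly.

Set Implicit Arguments.
Unset Strict Implicit.
Unset Printing Implicit Defensive.

Import Order.TTheory GRing.Theory Num.Theory.
Import numFieldTopology.Exports numFieldNormedType.Exports.
Local Open Scope classical_set_scope.
Local Open Scope ring_scope.
Local Open Scope complex_scope.

Definition Cx (R : realType) : numClosedFieldType := R[i].

Definition sigJ (R : realType) (r s : nat) : 'M[Cx R]_(r + s) :=
  diag_mx (\row_(i < r + s) (if (i < r)%N then 1 else -1)).

(* V_A _|_ V_B w.r.t. <.,.>_{r,s}, where V_A is the row space of A:
   <a,b>_{r,s} = a J b^*  for every row a of A and every row b of B. *)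
Definition mx_perp (R : realType) (r s m k : nat)
  (A : 'M[Cx R]_(m, r + s)) (B : 'M[Cx R]_(k, r + s)) : Prop :=
  A *m sigJ R r s *m (map_mx (@Num.conj (Cx R)) B)^T = 0.

Arguments mx_perp {R} r s {m k} A B.

(* A point of G(r,s) is represented by a square matrix whose row space is
   r-dimensional; points of P^{1,s} = G(1,s) by nonzero row vectors. *)

(* Dimension of V_{F(K)}: the span of all row spaces F z, z in K.
   d is that dimension iff some finite subfamily spans a d-dimensional space
   and no finite subfamily spans more. *)
Definition span_dim (R : realType) (n m : nat)
  (F : 'rV[Cx R]_n -> 'M[Cx R]_m) (K : set 'rV[Cx R]_n) (d : nat) : Prop :=
  (exists zs : seq 'rV[Cx R]_n,
      (forall z, z \in zs -> K z) /\ \rank (\sum_(z <- zs) F z)%MS = d)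
  /\ (forall zs : seq 'rV[Cx R]_n,
      (forall z, z \in zs -> K z) -> (\rank (\sum_(z <- zs) F z)%MS <= d)%N).

Definition hyperplane (R : realType) (n : nat) (a : 'rV[Cx R]_n) : set 'rV[Cx R]_n :=
  [set z | (z *m a^T) 0 0 = 0].

(* Holomorphic map from an open cone U in C^{1+s} \ {0} (the preimage of an
   open set of P^{1,s}) into G(r',s'): F is invariant under scaling of the
   argument (so it descends to P^{1,s}), takes values of rank r', and near each
   point admits a holomorphic frame, i.e. a complex-differentiable
   r' x (r'+s') matrix-valued map whose row space equals F. *)
Definition holo_grass_map (R : realType) (n r' s' : nat) (U : set 'rV[Cx R]_n)
  (F : 'rV[Cx R]_n -> 'M[Cx R]_(r' + s')) : Prop :=
  (forall z, U z -> \rank (F z) = r')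
  /\ (forall z (c : Cx R), U z -> c != 0 -> (F (c *: z) == F z)%MS)
  /\ (forall z, U z ->
       exists Phi : 'rV[Cx R]_n -> 'M[Cx R]_(r', r' + s'),
         (\forall w \near z, differentiable Phi w)
         /\ (\forall w \near z, (Phi w == F w)%MS)).

(* U is (the cone over) a connected open subset of P^{1,s} containing a null point. *)
Definition proj_domain (R : realType) (s : nat) (U : set 'rV[Cx R]_(1 + s)) : Prop :=
  open U /\ connected U /\ ~ U 0
  /\ (forall z (c : Cx R), U z -> c != 0 -> U (c *: z))
  /\ (exists z, U z /\ mx_perp 1 s z z).

Definition local_orthogonal_map (R : realType) (s r' s' : nat)
  (U : set 'rV[Cx R]_(1 + s)) (F : 'rV[Cx R]_(1 + s) -> 'M[Cx R]_(r' + s')) : Prop :=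
  proj_domain U /\ holo_grass_map U F
  /\ (forall z w, U z -> U w -> mx_perp 1 s z w -> mx_perp r' s' (F z) (F w)).

(* A nonempty Zariski-open subset of the space of hyperplanes (= dual P^s,
   hyperplanes H_a given by nonzero a up to scaling): the complement of the
   common zero locus of a family Ps of homogeneous polynomials, nonempty. *)
Definition nonempty_zariski_open (R : realType) (n : nat) (O : set 'rV[Cx R]_n) : Prop :=
  exists Ps : set (mpoly.mpoly n (Cx R)),
    (forall P, Ps P -> exists d, all (fun m => mpoly.mdeg m == d) (mpoly.msupp P))
    /\ (O = [set a | a != 0 /\ exists P, Ps P /\ mpoly.meval (fun i => a 0 i) P != 0])
    /\ (exists a, O a).

Definition general_hyperplane (R : realType) (n : nat) (Q : 'rV[Cx R]_n -> Prop) : Prop :=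
  exists O, nonempty_zariski_open O /\ forall a, O a -> Q a.

(* Main.v *)
Require Import Defs.
From HB Require Import structures.
From mathcomp Require Import all_boot all_order all_algebra.
From mathcomp Require Import all_classical all_reals all_analysis.
From mathcomp Require Import complex.
From mathcomp Require mpoly.

Import Order.TTheory GRing.Theory Num.Theory.
Import numFieldTopology.Exports numFieldNormedType.Exports.
Local Open Scope classical_set_scope.
Local Open Scope ring_scope.
Set Implicit Arguments.
Unset Strict Implicit.
Local Notation cj R := (@Num.conj (Cx R)).

Lemma perp_subl (R : realType) r s m1 m2 k (A : 'M[Cx R]_(m1, r + s))
  (B : 'M[Cx R]_(m2, r + s)) (C : 'M[Cx R]_(k, r + s)) :
  (A <= B)%MS -> mx_perp r s B C -> mx_perp r s A C.
Proof.
move=> AB; rewrite /mx_perp => H.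
rewrite -(mulmxKpV AB); move: (pinvmx B) => D. by rewrite -!mulmxA (mulmxA B) H !mulmx0.
Qed.

Lemma perp_subr (R : realType) r s m1 m2 k (A : 'M[Cx R]_(m1, r + s))
  (B : 'M[Cx R]_(m2, r + s)) (C : 'M[Cx R]_(k, r + s)) :
  (A <= B)%MS -> mx_perp r s C B -> mx_perp r s C A.
Proof.
move=> AB; rewrite /mx_perp => H.
rewrite -(mulmxKpV AB); move: (pinvmx B) => D; by rewrite map_mxM trmx_mul mulmxA H !mul0mx.
Qed.

Lemma perp_adds (R : realType) r s m1 m2 k (A : 'M[Cx R]_(m1, r + s))
  (B : 'M[Cx R]_(m2, r + s)) (C : 'M[Cx R]_(k, r + s)) :
  mx_perp r s A C -> mx_perp r s B C -> mx_perp r s (A + B)%MS C.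
Proof.
move=> HA HB; apply: (@perp_subl _ _ _ _ _ _ _ (col_mx A B)).
  by rewrite addsmxE.
by rewrite /mx_perp !mul_col_mx HA HB col_mx0.
Qed.

Lemma perp_sum (R : realType) r s n k (zs : seq 'rV[Cx R]_n)
  (F : 'rV[Cx R]_n -> 'M[Cx R]_(r + s)) (C : 'M[Cx R]_(k, r + s)) :
  (forall w, w \in zs -> mx_perp r s (F w) C) ->
  mx_perp r s (\sum_(w <- zs) F w)%MS C.
Proof.
elim: zs => [|w zs IH] H; first by rewrite big_nil /mx_perp !mul0mx.
rewrite big_cons; apply: perp_adds; first by apply: H; rewrite mem_head.
by apply: IH => x xz; apply: H; rewrite inE xz orbT.
Qed.

Lemma span_dim_ex (R : realType) n m (F : 'rV[Cx R]_n -> 'M[Cx R]_m)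
  (K : set 'rV[Cx R]_n) : exists d, span_dim F K d.
Proof.
pose P k := `[< exists zs : seq 'rV[Cx R]_n,
      (forall z, z \in zs -> K z) /\ \rank (\sum_(z <- zs) F z)%MS = k >].
have exP : exists k, P k.
  by exists 0%N; apply/asboolP; exists [::]; split => //; rewrite big_nil mxrank0.
have ubP : forall k, P k -> (k <= m)%N.
  by move=> k /asboolP [zs [_ <-]]; apply: rank_leq_col.
case: (ex_maxnP exP ubP) => d /asboolP Hd Hmax.
exists d; split => // zs Hzs; apply: Hmax; apply/asboolP; by exists zs.
Qed.

Definition polar (R : realType) (s : nat) (z : 'rV[Cx R]_(1 + s)) :
  'rV[Cx R]_(1 + s) := map_mx (cj R) z *m sigJ R 1 s.

Lemma sigJ_tr (R : realType) r s : (sigJ R r s)^T = sigJ R r s.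
Proof. by rewrite /sigJ tr_diag_mx. Qed.

Lemma sigJ_conj (R : realType) r s : map_mx (cj R) (sigJ R r s) = sigJ R r s.
Proof.
apply/matrixP => i j; rewrite !mxE rmorphMn; congr (_ *+ _).
by case: ifP => _; rewrite ?rmorph1 ?rmorphN1.
Qed.

Lemma sigJ_invol (R : realType) r s : sigJ R r s *m sigJ R r s = 1%:M.
Proof.
rewrite /sigJ mul_diag_mx; apply/matrixP => i j; rewrite !mxE.
case: (eqVneq i j) => [->|ij]; last by rewrite mulr0n mulr0.
by rewrite !mulr1n; case: ifP => _; rewrite ?mulr1 ?mulrNN ?mulr1.
Qed.

Lemma hyper_perp (R : realType) s (z w : 'rV[Cx R]_(1 + s)) :
  hyperplane (polar z) w <-> mx_perp 1 s w z.
Proof.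
rewrite /hyperplane /mx_perp /polar /= trmx_mul sigJ_tr mulmxA.
split=> [H|->]; last by rewrite mxE.
by apply/matrixP => i j; rewrite !ord1 H mxE.
Qed.

Lemma conjK_mx (R : realType) m n (A : 'M[Cx R]_(m, n)) :
  map_mx (cj R) (map_mx (cj R) A) = A.
Proof. by apply/matrixP => i j; rewrite !mxE conjCK. Qed.

Lemma polar_eq0 (R : realType) s (w : 'rV[Cx R]_(1 + s)) : polar w = 0 -> w = 0.
Proof.
rewrite /polar => H.
have : map_mx (cj R) w = 0.
  by rewrite -[map_mx _ w]mulmx1 -sigJ_invol mulmxA H mul0mx.
by move=> H2; rewrite -[w]conjK_mx H2 map_mx0.
Qed.

Lemma polar_surj (R : realType) s (b : 'rV[Cx R]_(1 + s)) :
  polar (map_mx (cj R) (b *m sigJ R 1 s)) = b.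
Proof. by rewrite /polar conjK_mx -mulmxA sigJ_invol mulmx1. Qed.

Lemma polar_lin (R : realType) s (z v : 'rV[Cx R]_(1 + s)) (t : Cx R) :
  t^* = t -> polar (z + t *: v) = polar z + t *: polar v.
Proof.
move=> tr; rewrite /polar map_mxD mulmxDl; congr (_ + _).
have -> : map_mx (cj R) (t *: v) = t *: map_mx (cj R) v.
  by apply/matrixP => i j; rewrite !mxE rmorphM /= tr.
by rewrite scalemxAl.
Qed.

Lemma line_zero (R : realType) n (P : mpoly.mpoly n (Cx R)) (c b : 'rV[Cx R]_n)
  (e : Cx R) : 0 < e ->
  (forall k : nat, mpoly.meval (fun i => (c + (e / k.+1%:R) *: b) 0 i) P = 0) ->
  mpoly.meval (fun i => (c + b) 0 i) P = 0.
Proof.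
move=> e0 H.
pose q : {poly Cx R} := \sum_(m <- mpoly.msupp P) (mpoly.mcoeff m P)%:P *
   \prod_i ((c 0 i)%:P + b 0 i *: 'X) ^+ (mpoly.fun_of_multinom m i).
have qE t : q.[t] = mpoly.meval (fun i => (c + t *: b) 0 i) P.
  rewrite mpoly.mevalE /q horner_sum; apply: eq_bigr => m _.
  rewrite hornerM hornerC horner_prod; congr (_ * _); apply: eq_bigr => i _.
  by rewrite horner_exp !hornerE !mxE mulrC.
have q0 : q = 0.
  apply/eqP; apply: contraT => qn0.
  pose rs := [seq e / k.+1%:R | k <- iota 0 (size q)].
  have := max_poly_roots qn0 (rs := rs).
  rewrite size_map size_iota ltnn; apply.
    by apply/allP => x /mapP [k _ ->]; rewrite /root qE H.
  rewrite map_inj_uniq ?iota_uniq // => k1 k2 /(mulfI (lt0r_neq0 e0)).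
  by move/invr_inj/eqP; rewrite eqr_nat => /eqP [].
by move: (qE 1); rewrite q0 horner0 scale1r => <-.
Qed.

Lemma conj_cvg (R : realType) (x : Cx R) : (cj R) @ x --> (cj R x).
Proof.
apply/(@cvgrPdist_lt _ _ _ (nbhs x) (nbhs_filter x)) => e e0; apply/nbhs_normP.
by exists e => // y /= xy; rewrite -rmorphB norm_conjC.
Qed.

Lemma cvg_sum_fun (T : Type) (F : set_system T) (FF : Filter F) (K : numFieldType)
  (I : Type) (r : seq I) (f : I -> T -> K) (l : I -> K) :
  (forall i, f i x @[x --> F] --> l i) ->
  (\sum_(i <- r) f i x) @[x --> F] --> \sum_(i <- r) l i.
Proof.
move=> H; elim: r => [|i r IH].
  under eq_fun do rewrite big_nil. rewrite big_nil; exact: cvg_cst.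
under eq_fun do rewrite big_cons. rewrite big_cons; exact: cvgD.
Qed.

Theorem lemma3p2 (R : realType) (s r' s' : nat)
  (hs : (2 <= s)%N) (hr' : (1 <= r')%N) (hr's' : (r' <= s')%N)
  (U : set 'rV[Cx R]_(1 + s)) (F : 'rV[Cx R]_(1 + s) -> 'M[Cx R]_(r' + s')) :
  local_orthogonal_map U F ->
  general_hyperplane (fun a : 'rV[Cx R]_(1 + s) =>
    forall d, span_dim F U d <-> span_dim F (U `&` hyperplane a) d) ->
  forall z, U z -> mx_perp r' s' (F z) (F z).
Proof.
move=> [[Uo [Uc [U0 [Usc Unull]]]] [[Hrk [Hsc Hhol]] Horth]].
move=> [OO [[Ps [_ [HO [a0 Oa0]]]] HQ]] z0 Uz0.
have nullA : forall z, U z -> OO (polar z) -> mx_perp r' s' (F z) (F z).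
  move=> z Uz Oz; have [d Hd] := span_dim_ex F U.
  have [[zs [zsH rk]] _] := (HQ _ Oz d).1 Hd.
  have bound := Hd.2 (z :: zs).
  rewrite big_cons in bound.
  set S := (\sum_(w <- zs) F w)%MS in rk bound.
  have FzS : (F z <= S)%MS.
    have sub : (S <= F z + S)%MS := addsmxSr _ _.
    have := geq_leqif (mxrank_leqif_sup sub).
    rewrite rk bound; last first.
      by move=> w; rewrite inE => /orP [/eqP -> //|/zsH []].
    by move/esym => H; apply: submx_trans H; apply: addsmxSl.
  apply: (perp_subl FzS); apply: perp_sum => w wzs.
  have [Uw Hw] := zsH w wzs.
  by apply: Horth => //; apply/hyper_perp.
have [Phi [dPhi ePhi]] := Hhol z0 Uz0.
pose N w := Phi w *m sigJ R r' s' *m (map_mx (cj R) (Phi w))^T.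
suff N0 : N z0 = 0.
  have e0 : (Phi z0 == F z0)%MS := nbhs_singleton ePhi.
  have FP : (F z0 <= Phi z0)%MS by case/andP: e0.
  by apply: (perp_subl FP); apply: (perp_subr FP).
apply/matrixP => i j; rewrite [RHS]mxE; apply: contrapT => gn0.
pose g w := N w i j.
have gE w : g w = \sum_k (\sum_l Phi w i l * sigJ R r' s' l k) * cj R (Phi w j k).
  by rewrite /g /N !mxE; apply: eq_bigr => k _; rewrite !mxE.
have cPhi : Phi @ z0 --> Phi z0.
  exact: (differentiable_continuous (nbhs_singleton dPhi)).
have ce (a : 'I_r') (b : 'I_(r' + s')) : (fun w => Phi w a b) @ z0 --> Phi z0 a b.
  exact: (cvg_comp _ _ cPhi (@coord_continuous _ _ _ a b (Phi z0))).
have cg : g @ z0 --> g z0.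
  have -> : g = (fun w => \sum_k (\sum_l Phi w i l * sigJ R r' s' l k) * cj R (Phi w j k)).
    by apply/funext => w; exact: gE.
  apply: (cvg_sum_fun (nbhs_filter z0)) => k; apply: (@cvgM _ _ _ (nbhs_filter z0)).
    apply: (cvg_sum_fun (nbhs_filter z0)) => l; apply: (@cvgM _ _ _ (nbhs_filter z0)); [exact: ce | exact: cvg_cst].
  exact: (cvg_comp _ _ (ce j k) (@conj_cvg _ (Phi z0 j k))).
have gnz : \forall w \near z0, g w != 0.
  have gp : 0 < `|g z0| by rewrite normr_gt0; apply/eqP.
  have := (cvgrPdist_lt (FF := nbhs_filter z0) g (g z0)).1 cg _ gp.
  apply: (@filterS _ _ (nbhs_filter z0)) => w lt; apply/eqP => gw0.
  by move: lt; rewrite gw0 subr0 ltxx.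
have nU : \forall w \near z0, U w.
  by apply: open_nbhs_nbhs; split.
have nall : \forall w \near z0,
    forall P, Ps P -> mpoly.meval (fun i => polar w 0 i) P = 0.
  have := (@near_andP _ _ _ _ (nbhs_filter z0)).2 (conj gnz ((@near_andP _ _ _ _ (nbhs_filter z0)).2 (conj nU ePhi))).
  apply: (@filterS _ _ (nbhs_filter z0)) => w [gw [Uw ew]] P PsP.
  apply: contrapT => Pn0.
  have Ow : OO (polar w).
    rewrite HO; split.
      apply/negP => /eqP pw; apply: U0; rewrite -(@polar_eq0 R s w) //.
      by apply/matrixP => a c; rewrite [RHS]mxE; exact: (congr1 (fun f => f a c) pw).
    by exists P; split => //; apply/eqP.
  have Fperp := nullA w Uw Ow.
  have PF : (Phi w <= F w)%MS by case/andP: ew.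
  have := perp_subl PF (perp_subr PF Fperp).
  rewrite /mx_perp => Nw; move: gw; rewrite /g /N Nw mxE.
  by rewrite eqxx.
move/nbhs_normP: nall => [δ δ0 Hδ].
move: Oa0; rewrite HO => [[a0n0 [P0 [Ps0 P0n0]]]].
move/eqP: P0n0; apply.
pose b := a0 - polar z0.
pose v := map_mx (cj R) (b *m sigJ R 1 s).
have vb : polar v = b := polar_surj b.
pose e := δ / (`|v| + 1).
have v1 : 0 < `|v| + 1 by apply: ltr_wpDl (normr_ge0 v) ltr01.
have e0 : 0 < e by rewrite divr_gt0.
have := line_zero (P := P0) (c := polar z0) (b := b) e0.
have -> : polar z0 + b = a0 by rewrite /b addrC subrK.
apply => k.
set t := e / k.+1%:R.
have t0 : 0 <= t by rewrite divr_ge0 // ltW.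
have -> : polar z0 + t *: b = polar (z0 + t *: v).
  by rewrite polar_lin ?geC0_conj // vb.
apply: (Hδ _ _ P0 Ps0) => /=.
rewrite opprD addrA subrr add0r normrN normrZ ger0_norm //.
apply: (le_lt_trans (y := e * `|v|)).
  rewrite ler_wpM2r // /t ler_pdivrMr ?ltr0Sn //.
  by apply: ler_peMr; [apply: ltW | rewrite ler1n].
by rewrite /e mulrAC ltr_pdivrMr // ltr_pM2l // ltrDl ltr01.
Qed.
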